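(* For all positive integers $n\geq 2$ and $t$, the set $D_{n,t}$ is a dominating set of $S(K_n,t)$.
   Context: For a positive integer $n$ let $[n]=\{1,\dots,n\}$. For positive integers $n,t$, the Sierpiński graph $S(K_n,t)$ is the simple graph with vertex set $[n]^t$ (words $v_1v_2\cdots v_t$ with $v_i\in[n]$), in which $u_1\cdots u_t$ and $v_1\cdots v_t$ are adjacent if and only if there is $s\in[t]$ with $u_j=v_j$ for all $j<s$, $u_s\neq v_s$, and $u_j=v_s$ and $v_j=u_s$ for all $j>s$. A set of vertices is dominating if every vertex lies in it or is adjacent to one of its elements. Write $a^k$ for the word consisting of $k$ copies of the letter $a$. The sets $D_{n,t}\subseteq[n]^t$ are defined recursively: $D_{n,1}=\{1\}$, $D_{n,2}=\{11,21,\dots,n1\}$. For $t\geq 3$ and $\mathbf v=v_1\cdots v_{t-2}\in D_{n,t-2}$ put $E_1(\mathbf v)=\{v_1\cdots v_{t-2}\alpha\alpha:\alpha\in[n]\}$, $E_2(\mathbf v)=\{v_1\cdots v_{t-3}\alpha\beta v_{t-2}:\alpha,\beta\in[n]\setminus\{v_{t-2}\}\}$, and, if $\mathbf v$ is not a constant word, let $\ell$ be the largest index in $[t-3]$ with $v_\ell\neq v_{\ell+1}$ and put $E_3(\mathbf v)=\{v_1\cdots v_{\ell-1}v_{\ell+1}v_\ell^{\,t-\ell-2}\alpha v_\ell:\alpha\in[n]\setminus\{v_\ell\}\}$. If $t\geq 3$ is odd, $D_{n,t}=E_1(1^{t-2})\cup E_2(1^{t-2})\cup\bigcup_{\mathbf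 v\in D_{n,t-2}\setminus\{1^{t-2}\}}\big(E_1(\mathbf v)\cup E_2(\mathbf v)\cup E_3(\mathbf v)\big)$. If $t\geq 4$ is even, $D_{n,t}=\{1^{t-2}\alpha1:\alpha\in[n]\}\cup\bigcup_{\mathbf v\in D_{n,t-2}\setminus\{1^{t-2}\}}\big(E_1(\mathbf v)\cup E_2(\mathbf v)\cup E_3(\mathbf v)\big)$. (In this recursion $1^{t-2}\in D_{n,t-2}$ is the only constant word in $D_{n,t-2}$, so $E_3$ is applied only to non-constant words.) *)

(* Defs.v *)
(* Words over [n] = {1..n} are represented as seq nat
   (0-indexed positions; letters are the nats 1..n). *)
From mathcomp Require Import all_boot.
Set Implicit Arguments. Unset Strict Implicit. Unset Printing Implicit Defensive.

Definition is_word (n t : nat) (w : seq nat) : bool :=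
  (size w == t) && all (fun a => (0 < a) && (a <= n)) w.

(* adjacency in S(K_n,t) (s is 0-indexed here) *)
Definition sier_adj (t : nat) (u v : seq nat) : Prop :=
  exists s, [/\ s < t,
    (forall j, j < s -> nth 0 u j = nth 0 v j),
    nth 0 u s <> nth 0 v s &
    (forall j, s < j < t -> nth 0 u j = nth 0 v s /\ nth 0 v j = nth 0 u s)].

Definition dominating (n t : nat) (D : seq (seq nat)) : Prop :=
  (forall d, d \in D -> is_word n t d) /\
  (forall w, is_word n t w -> w \in D \/ exists2 d, d \in D & sier_adj t w d).

Definition letters (n : nat) : seq nat := iota 1 n.

Definition E1 (n : nat) (v : seq nat) : seq (seq nat) :=
  [seq v ++ [:: a; a] | a <- letters n].

(* E_2(v), v = v_1 ... v_{t-2} nonempty *)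
Definition E2 (n : nat) (v : seq nat) : seq (seq nat) :=
  let k := size v in
  let vl := nth 0 v k.-1 in
  [seq take k.-1 v ++ [:: a; b; vl] |
     a <- [seq x <- letters n | x != vl], b <- [seq x <- letters n | x != vl]].

(* 0-indexed version of ell: largest i < size v - 1 with v_i != v_{i+1}
   (i.e. ell - 1 for the paper's 1-indexed ell) *)
Definition ell0 (v : seq nat) : nat :=
  last 0 [seq i <- iota 0 (size v).-1 | nth 0 v i != nth 0 v i.+1].

(* E_3(v) = { v_1..v_{ell-1} v_{ell+1} v_ell^{t-ell-2} alpha v_ell : alpha <> v_ell },
   with t - 2 = size v *)
Definition E3 (n : nat) (v : seq nat) : seq (seq nat) :=
  let k := size v in
  let l := ell0 v in
  let vl := nth 0 v l in
  [seq take l v ++ [:: nth 0 v l.+1] ++ nseq (k - l.+1) vl ++ [:: a; vl] |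
     a <- [seq x <- letters n | x != vl]].

Definition Eall (n : nat) (v : seq nat) : seq (seq nat) := E1 n v ++ E2 n v ++ E3 n v.

Fixpoint Dset (n t : nat) : seq (seq nat) :=
  match t with
  | 0 => [::]
  | 1 => [:: [:: 1]]
  | S (S t') =>
    if t' == 0 then [seq [:: a; 1] | a <- letters n]
    else
      let prev := Dset n t' in
      let rest := flatten [seq Eall n v | v <- prev & v != nseq t' 1] in
      if odd t then E1 n (nseq t' 1) ++ E2 n (nseq t' 1) ++ rest
      else [seq nseq t' 1 ++ [:: a; 1] | a <- letters n] ++ rest
  end.

(* Main.v *)
Require Import Defs.
From mathcomp Require Import all_boot zify.
Set Implicit Arguments. Unset Strict Implicit. Unset Printing Implicit Defensive.

Lemma mem_letters n a : (a \in letters n) = (0 < a) && (a <= n).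
Proof. rewrite /letters mem_iota; lia. Qed.

Lemma adj_sym t u v : sier_adj t u v -> sier_adj t v u.
Proof.
case=> s [Hs H1 H2 H3]; exists s; split=> //.
- by move=> j Hj; rewrite H1.
- by move=> E; apply: H2; rewrite E.
- by move=> j Hj; case: (H3 j Hj) => -> ->.
Qed.

Lemma nth_tail (p : seq nat) (b a m i : nat) : size p < i -> i < size p + m.+1 ->
  nth 0 (p ++ b :: nseq m a) i = a.
Proof.
move=> H1 H2; rewrite nth_cat ltnNge (ltnW H1) /=.
case E: (i - size p) => [|j]; first lia.
by rewrite /= nth_nseq (_ : j < m) //; lia.
Qed.

Lemma nth_mid (p : seq nat) (b a m : nat) : nth 0 (p ++ b :: nseq m a) (size p) = b.
Proof. by rewrite nth_cat ltnn subnn. Qed.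

Lemma adj_form (t : nat) (p : seq nat) (a b m : nat) : a != b -> t = size p + m.+1 ->
  sier_adj t (p ++ a :: nseq m b) (p ++ b :: nseq m a).
Proof.
move=> ab ->; exists (size p); split.
- lia.
- by move=> j Hj; rewrite !nth_cat Hj.
- by rewrite !nth_mid; apply/eqP.
- move=> j /andP[H1 H2]; rewrite !nth_mid !nth_tail //.
Qed.

Lemma adj_decomp (t : nat) (u v : seq nat) : size u = t -> size v = t -> sier_adj t u v ->
  exists p a b m, [/\ a != b, u = p ++ a :: nseq m b & v = p ++ b :: nseq m a].
Proof.
move=> Su Sv [s [Hs H1 H2 H3]].
exists (take s u), (nth 0 u s), (nth 0 v s), (t - s.+1); split.
- by apply/eqP.
- apply: (@eq_from_nth _ 0).
    by rewrite size_cat size_takel /= ?size_nseq; lia.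
  move=> i Hi; rewrite nth_cat size_takel; last lia.
  case: ltnP => Hi2; first by rewrite nth_take.
  case E: (i - s) => [|j] /=; first by have ->: i = s by lia.
  rewrite nth_nseq (_ : j < t - s.+1); last lia.
  by case: (H3 i); first lia.
- apply: (@eq_from_nth _ 0).
    by rewrite size_cat size_takel /= ?size_nseq; lia.
  move=> i Hi; rewrite nth_cat size_takel; last lia.
  case: ltnP => Hi2; first by rewrite nth_take // H1.
  case E: (i - s) => [|j] /=; first by have ->: i = s by lia.
  rewrite nth_nseq (_ : j < t - s.+1); last lia.
  by case: (H3 i); first lia.
Qed.

Lemma E1_mem n v a : 0 < a <= n -> v ++ [:: a; a] \in E1 n v.
Proof. by move=> Ha; apply/mapP; exists a; rewrite ?mem_letters. Qed.

Lemma E2_mem (n : nat) (p : seq nat) (c a b : nat) : 0 < a <= n -> 0 < b <= n -> a != c -> b != c ->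
  p ++ [:: a; b; c] \in E2 n (p ++ [:: c]).
Proof.
move=> Ha Hb ac bc; rewrite /E2 size_cat addn1 /= take_size_cat //.
rewrite nth_cat ltnn subnn /=.
apply/allpairsP; exists (a, b); rewrite /= !mem_filter !mem_letters ac bc Ha Hb.
by split.
Qed.

Lemma ell0_form (p : seq nat) (b a m : nat) : b != a -> 0 < m -> ell0 (p ++ b :: nseq m a) = size p.
Proof.
move=> ba; case: m => [|m] // _.
rewrite /ell0 size_cat /= size_nseq (_ : (size p + m.+2).-1 = size p + m.+1); last lia.
rewrite iotaD add0n /= filter_cat /=.
rewrite -[a :: nseq m a]/(nseq m.+1 a) nth_mid nth_tail; [|lia|lia]. rewrite ba.
have: ~~ has (fun i => nth 0 (p ++ b :: nseq m.+1 a) i != nth 0 (p ++ b :: nseq m.+1 a) i.+1)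
  (iota (size p).+1 m).
  apply/hasPn => i; rewrite mem_iota => Hi.
  move: Hi => /andP[]; case: i => [|j] Hi1 Hi2; first by []. rewrite !nth_tail ?eqxx //; lia.


rewrite has_filter negbK => /eqP ->.
by rewrite last_cat.
Qed.

Lemma E3_mem (n : nat) (p : seq nat) (b a m x : nat) : b != a -> 0 < m -> 0 < x <= n -> x != b ->
  p ++ a :: nseq m b ++ [:: x; b] \in E3 n (p ++ b :: nseq m a).
Proof.
move=> ba m0 Hx xb; rewrite /E3 /= ell0_form // take_size_cat //.
rewrite nth_mid nth_tail; [|lia|rewrite /=; lia].
rewrite size_cat /= size_nseq (_ : size p + m.+1 - (size p).+1 = m); last lia.
apply/mapP; exists x; last by [].
by rewrite mem_filter xb mem_letters.
Qed.

Lemma ell0_lt (v : seq nat) : 2 <= size v -> (ell0 v).+1 < size v.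
Proof.
move=> H; rewrite /ell0.
set s := [seq i <- iota 0 (size v).-1 | nth 0 v i != nth 0 v i.+1].
suff Hs : forall x : nat, x \in 0 :: s -> x.+1 < size v by apply: Hs; exact: mem_last.
move=> x; rewrite inE => /orP[/eqP ->|]; first lia.
rewrite mem_filter mem_iota => /andP[_]; lia.
Qed.

Lemma Dset_rest n k d y : 0 < k -> d \in Dset n k -> d != nseq k 1 ->
  y \in Eall n d -> y \in Dset n k.+2.
Proof.
move=> k0 Hd Hne Hy; rewrite [Dset n k.+2]/=.
have -> : (k == 0) = false by case: k k0 {Hd Hne}.
case: ifP => _; rewrite ?mem_cat; apply/orP; right; rewrite ?mem_cat; try (apply/orP; right);
  apply/flatten_mapP; exists d => //; by rewrite mem_filter Hne.
Qed.

Lemma Dset_odd n k y : 0 < k -> odd k ->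
  y \in E1 n (nseq k 1) ++ E2 n (nseq k 1) -> y \in Dset n k.+2.
Proof.
move=> k0 ok Hy; rewrite [Dset n k.+2]/=.
have -> : (k == 0) = false by case: k k0 {ok Hy}.
rewrite negbK ok catA mem_cat Hy //.
Qed.

Lemma Dset_even n k a : 0 < k -> ~~ odd k -> 0 < a <= n ->
  nseq k 1 ++ [:: a; 1] \in Dset n k.+2.
Proof.
move=> k0 ok Ha; rewrite [Dset n k.+2]/=.
have -> : (k == 0) = false by case: k k0 {ok}.
rewrite negbK (negbTE ok) mem_cat; apply/orP; left.
by apply/mapP; exists a; rewrite ?mem_letters.
Qed.

Lemma Dset_even' n j a : ~~ odd j -> 0 < a <= n ->
  nseq j 1 ++ [:: a; 1] \in Dset n j.+2.
Proof.
case: j => [|j] oj Ha; last by apply: Dset_even.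
by apply/mapP; exists a; rewrite ?mem_letters.
Qed.

Lemma wordP (n t : nat) (w : seq nat) : reflect (size w = t /\ forall a, a \in w -> 0 < a <= n) (is_word n t w).
Proof.
rewrite /is_word; apply: (iffP andP) => [[/eqP -> /allP H]|[-> H]]; split => //.
by apply/allP.
Qed.

Lemma E1_words (n k : nat) (v y : seq nat) : is_word n k v -> y \in E1 n v -> is_word n k.+2 y.
Proof.
move=> /wordP[Sv Hv] /mapP[a]; rewrite mem_letters => Ha ->.
apply/wordP; split; first by rewrite size_cat Sv addn2.
move=> x; rewrite mem_cat => /orP[/Hv //|]; rewrite !inE => /orP[] /eqP -> //.
Qed.

Lemma E2_words (n k : nat) (v y : seq nat) : 0 < k -> is_word n k v -> y \in E2 n v -> is_word n k.+2 y.
Proof.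
move=> k0 /wordP[Sv Hv]; rewrite /E2 => /allpairsP[[a b] /= [Ha Hb ->]].
move: Ha Hb; rewrite !mem_filter !mem_letters => /andP[_ Ha] /andP[_ Hb].
apply/wordP; split. rewrite size_cat size_takel /=. rewrite Sv; case: (k) k0 => // j _ /=. by rewrite addn3. exact: leq_pred.
move=> x; rewrite mem_cat => /orP[/mem_take /Hv //|]; rewrite !inE.
case/or3P => /eqP -> //; apply: Hv; apply: mem_nth; by rewrite Sv ltn_predL.
Qed.

Lemma in_nseq_nat (m c x : nat) : x \in nseq m c -> x = c.
Proof. by rewrite mem_nseq => /andP[_ /eqP]. Qed.

Lemma E3_words (n k : nat) (v y : seq nat) : 2 <= k -> is_word n k v -> y \in E3 n v -> is_word n k.+2 y.
Proof.
move=> k2 /wordP[Sv Hv]; rewrite /E3 => /mapP[a]; rewrite mem_filter mem_letters.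
move=> /andP[_ Ha] ->.
have Hl := ell0_lt (v := v); rewrite Sv in Hl; have {}Hl := Hl k2.
apply/wordP; split.
  by rewrite !size_cat size_takel /= ?size_nseq; lia.
move=> x; rewrite !mem_cat => /or3P[/mem_take /Hv //| |].
  rewrite inE => /eqP ->; apply: Hv; apply: mem_nth; rewrite Sv; lia.
move=> /orP[/in_nseq_nat ->|]; first by apply: Hv; apply: mem_nth; rewrite Sv; lia.
rewrite !inE => /orP[/eqP -> // | /eqP ->].
apply: Hv; apply: mem_nth; rewrite Sv; lia.
Qed.

Lemma nseq_word n k : 0 < n -> is_word n k (nseq k 1).
Proof.
move=> n0; apply/wordP; split; first by rewrite size_nseq.
by move=> x /in_nseq_nat ->; rewrite n0.
Qed.

Lemma rest_words n k d y : 0 < k -> d \in Dset n k -> d != nseq k 1 ->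
  is_word n k d -> y \in Eall n d -> is_word n k.+2 y.
Proof.
move=> k0 Hd Hne Hw; rewrite /Eall !mem_cat => /or3P[H|H|H].
- exact: E1_words H.
- exact: E2_words H.
- apply: E3_words H => //.
  case: k k0 Hd Hne Hw => [|[|k]] // _ Hd Hne _.
  by move: Hd Hne; rewrite /= inE => /eqP ->.
Qed.

Lemma Dset_unfold n k : 0 < k -> Dset n k.+2 =
  let rest := flatten [seq Eall n v | v <- Dset n k & v != nseq k 1] in
  if odd k then E1 n (nseq k 1) ++ E2 n (nseq k 1) ++ rest
  else [seq nseq k 1 ++ [:: a; 1] | a <- letters n] ++ rest.
Proof. by case: k => [|k] //= _; rewrite negbK. Qed.

Lemma Dset_words n t : 0 < n -> forall d, d \in Dset n t -> is_word n t d.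
Proof.
move=> n0; elim/ltn_ind: t => t IH d.
case: t IH => [|[|k]] IH //.
- by rewrite /= inE => /eqP ->; rewrite /is_word /= n0.
case: k IH => [|j] IH.
  by move=> /mapP[a]; rewrite mem_letters => Ha ->; rewrite /is_word /= Ha n0.
set k := j.+1.
have k0 : 0 < k by [].
rewrite Dset_unfold //.
have Hr : d \in flatten [seq Eall n v | v <- Dset n k & v != nseq k 1] -> is_word n k.+2 d.
  move=> /flatten_mapP[v]; rewrite mem_filter => /andP[Hne Hv] Hd.
  apply: (rest_words k0 Hv Hne _ Hd); exact: IH.
cbv zeta; case: ifP => _; rewrite !mem_cat.
- case/or3P => [H|H|/Hr //].
  + exact: E1_words (nseq_word k n0) H.
  + exact: E2_words k0 (nseq_word k n0) H.
- case/orP => [|/Hr //].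
  move=> /mapP[a]; rewrite mem_letters => Ha ->.
  apply/wordP; split; first by rewrite size_cat size_nseq addn2.
  move=> x; rewrite mem_cat => /orP[/in_nseq_nat ->|]; first by rewrite n0.
  by rewrite !inE => /orP[] /eqP ->; rewrite ?n0.
Qed.

Definition dom (t : nat) (D : seq (seq nat)) (w : seq nat) :=
  w \in D \/ exists2 d, d \in D & sier_adj t w d.

Lemma copy_hit (t : nat) D (q : seq nat) (z y : nat) : q ++ [:: z] \in D ->
  t = (size q).+1 -> dom t D (q ++ [:: y]).
Proof.
move=> H Ht; case: (eqVneq y z) => [->|yz]; first by left.
right; exists (q ++ [:: z]) => //.
by apply: (@adj_form t q y z 0) => //; rewrite addn1.
Qed.

Lemma bridge_hit (t : nat) D (p : seq nat) (a b m : nat) :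
  p ++ b :: nseq m a \in D -> a != b -> t = size p + m.+1 ->
  dom t D (p ++ a :: nseq m b).
Proof. by move=> H ab Ht; right; exists (p ++ b :: nseq m a) => //; apply: adj_form. Qed.

Lemma good_E12 n k d z : 0 < k -> d \in Dset n k -> (d != nseq k 1) || odd k ->
  z \in E1 n d ++ E2 n d -> z \in Dset n k.+2.
Proof.
move=> k0 Hd /orP[Hne|ok] Hz.
- apply: (Dset_rest k0 Hd Hne); by rewrite /Eall catA mem_cat Hz.
- case: (eqVneq d (nseq k 1)) => [E|Hne].
    by apply: Dset_odd => //; rewrite -E.
  apply: (Dset_rest k0 Hd Hne); by rewrite /Eall catA mem_cat Hz.
Qed.

Lemma good_E3 n k d z : 0 < k -> d \in Dset n k -> d != nseq k 1 ->
  z \in E3 n d -> z \in Dset n k.+2.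
Proof.
move=> k0 Hd Hne Hz; apply: (Dset_rest k0 Hd Hne); by rewrite /Eall !mem_cat Hz !orbT.
Qed.

Lemma nseq_add2 (m c : nat) : nseq m c ++ [:: c; c] = nseq m.+2 c.
Proof. by rewrite -addn2 nseqD. Qed.

Lemma caseC n k (p : seq nat) (a b m x y : nat) :
  0 < k -> p ++ b :: nseq m a \in Dset n k -> a != b -> 0 < m ->
  size p + m.+1 = k -> 0 < a <= n -> 0 < x <= n -> 0 < y <= n ->
  dom k.+2 (Dset n k.+2) ((p ++ a :: nseq m b) ++ [:: x; y]).
Proof.
move=> k0 Hd ab m0 Sk Ha Hx Hy.
have Hne : p ++ b :: nseq m a != nseq k 1.
  apply/eqP => E.
  have : a \in p ++ b :: nseq m a by rewrite mem_cat inE mem_nseq m0 eqxx !orbT.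
  have : b \in p ++ b :: nseq m a by rewrite mem_cat inE eqxx orbT.
  rewrite E => /in_nseq_nat Eb /in_nseq_nat Ea; by rewrite Ea Eb eqxx in ab.
have E3in : forall c, 0 < c <= n -> c != b ->
    (p ++ a :: nseq m b) ++ [:: c; b] \in Dset n k.+2.
  move=> c Hc cb; apply: (good_E3 k0 Hd Hne).
  by rewrite -catA cat_cons; apply: E3_mem => //; rewrite eq_sym.
case: (eqVneq x b) => [->|xb].
- case: (eqVneq y b) => [->|yb].
  + rewrite -catA cat_cons nseq_add2.
    apply: bridge_hit => //; last by rewrite -Sk; lia.
    rewrite -nseq_add2 -cat_cons catA.
    apply: (good_E12 k0 Hd); first by rewrite Hne.
    by rewrite mem_cat E1_mem.
  + rewrite (_ : [:: b; y] = b :: nseq 1 y) //.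
    apply: bridge_hit; first exact: E3in.
      by rewrite eq_sym.
    by rewrite size_cat /= size_nseq; lia.
- rewrite (_ : [:: x; y] = [:: x] ++ [:: y]) // catA.
  apply: copy_hit; first by rewrite -catA; exact: E3in.
  by rewrite !size_cat /= size_nseq; lia.
Qed.

Lemma caseB n k (p : seq nat) (a b x y : nat) :
  0 < k -> p ++ [:: b] \in Dset n k -> (p ++ [:: b] != nseq k 1) || odd k ->
  a != b -> (size p).+1 = k -> 0 < a <= n -> 0 < x <= n -> 0 < y <= n ->
  dom k.+2 (Dset n k.+2) ((p ++ [:: a]) ++ [:: x; y]).
Proof.
move=> k0 Hd good ab Sk Ha Hx Hy.
have E2in : forall c, 0 < c <= n -> c != b ->
    p ++ [:: a; c; b] \in Dset n k.+2.
  move=> c Hc cb; apply: (good_E12 k0 Hd good).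
  by rewrite mem_cat E2_mem ?orbT.
case: (eqVneq x b) => [->|xb].
- case: (eqVneq y b) => [->|yb].
  + rewrite -catA /= -[[:: a, b & [:: b]]]/(a :: nseq 2 b).
    apply: bridge_hit => //; last by rewrite -Sk; lia.
    rewrite -[b :: nseq 2 a]/([:: b] ++ [:: a; a]) catA.
    apply: (good_E12 k0 Hd good).
    by rewrite mem_cat E1_mem.
  + rewrite (_ : [:: b; y] = b :: nseq 1 y) //.
    apply: bridge_hit; first by rewrite -catA; exact: E2in.
      by rewrite eq_sym.
    by rewrite size_cat /=; lia.
- rewrite (_ : [:: x; y] = [:: x] ++ [:: y]) // !catA.
  apply: copy_hit; first by rewrite -!catA; exact: E2in.
  by rewrite !size_cat /=; lia.
Qed.

Lemma split2 (w : seq nat) k : size w = k.+2 ->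
  exists u x y, w = u ++ [:: x; y] /\ size u = k.
Proof.
move=> Sw; move: (cat_take_drop k w) (size_drop k w).
case: (drop k w) => [|x [|y [|z s]]] H; rewrite Sw /=; try lia.
move=> _; exists (take k w), x, y; split; first by rewrite H.
rewrite size_takel // Sw; lia.
Qed.

Lemma step n k : 1 < n -> 0 < k -> dominating n k (Dset n k) ->
  forall w, is_word n k.+2 w -> dom k.+2 (Dset n k.+2) w.
Proof.
move=> n1 k0 [DW DD] w /wordP[Sw Hw].
have [u [x [y [Ew Su]]]] := split2 Sw; subst w.
have Hx : 0 < x <= n by apply: Hw; rewrite mem_cat !inE eqxx orbT.
have Hy : 0 < y <= n by apply: Hw; rewrite mem_cat !inE eqxx !orbT.
have Hu : forall c, c \in u -> 0 < c <= n by move=> c Hc; apply: Hw; rewrite mem_cat Hc.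
have Hun : is_word n k u by apply/wordP.
case: (DD u Hun) => [Hin|[d Hd Had]].
- case: (boolP ((u != nseq k 1) || odd k)) => good.
    rewrite (_ : [:: x; y] = [:: x] ++ [:: y]) // catA.
    apply: (copy_hit (z := x)); last by rewrite size_cat Su addn1.
    rewrite -catA /=; apply: (good_E12 k0 Hin good).
    by rewrite mem_cat E1_mem.
  move: good; rewrite negb_or negbK => /andP[/eqP Eu ok].
  rewrite (_ : [:: x; y] = [:: x] ++ [:: y]) // catA.
  apply: (copy_hit (z := 1)); last by rewrite size_cat Su addn1.
  by rewrite -catA Eu; apply: Dset_even.
- have /wordP[Sd _] := DW d Hd.
  have [p [a [b [m [ab Eu Ed]]]]] := adj_decomp Su Sd Had.
  have Ha : 0 < a <= n by apply: Hu; rewrite Eu mem_cat inE eqxx orbT.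
  have Sk : size p + m.+1 = k by rewrite -Su Eu size_cat /= size_nseq.
  case: m Eu Ed Sk => [|m] Eu Ed Sk; last first.
    by rewrite Eu; apply: caseC => //; rewrite -Ed.
  rewrite /= in Eu Ed.
  case: (boolP ((d != nseq k 1) || odd k)) => good.
    rewrite Eu; apply: (caseB k0 _ _ ab) => //; rewrite -?Ed //; by rewrite -Sk addn1.
  move: good; rewrite negb_or negbK => /andP[/eqP Edk ok].
  clear Sw Hw DW DD Hd Had Hun Hu.
  case: k k0 ok Su Sd Sk Edk => [|[|j]] // _ ok Su Sd Sk Edk.
  have Sp : size p = j.+1 by move: Sk; rewrite addn1 => -[].
  have N2 : nseq j.+2 1 = nseq j.+1 1 ++ [:: 1] by rewrite -(addn1 j.+1) nseqD.
  have N1 : nseq j.+1 1 = nseq j 1 ++ [:: 1] by rewrite -(addn1 j) nseqD.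
  move: Edk; rewrite Ed N2 => /eqP.
  rewrite eqseq_cat ?size_nseq // => /andP[/eqP Ep /eqP [Eb]].
  rewrite Eu Ep N1 -(catA (nseq j 1) [:: 1] [:: a]) cat1s.
  change (dom j.+4 (Dset n j.+4) ((nseq j 1 ++ 1 :: nseq 1 a) ++ [:: x; y])).
  apply: caseC => //.
  - by apply: Dset_even' => //; move: ok => /=; rewrite negbK.
  - by rewrite -Eb eq_sym.
  - by rewrite size_nseq addn2.
  - by rewrite /= ltnW.
Qed.

Theorem theorem2p6 (n t : nat) : 2 <= n -> 0 < t -> dominating n t (Dset n t).
Proof.
move=> n2; have n0 : 0 < n by apply: ltnW.
elim/ltn_ind: t => t IH t0.
split; first by move=> d; apply: Dset_words.
case: t IH t0 => [|[|k]] IH // _ w Hw.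
- move: Hw => /wordP[Sw Hw].
  case: w Sw Hw => [|c [|]] // _ Hw.
  case: (eqVneq c 1) => [->|c1]; first by left; rewrite inE.
  right; exists [:: 1]; first by rewrite inE.
  exact: (@adj_form 1 [::] c 1 0).
case: k IH Hw => [|k] IH Hw.
  move: Hw => /wordP[Sw Hw].
  case: w Sw Hw => [|x [|y []]] // _ Hw.
  apply: (copy_hit (q := [:: x]) (z := 1)) => //.
  apply/mapP; exists x => //; rewrite mem_letters; apply: Hw; exact: mem_head.
apply: step => //; apply: IH => //; lia.
Qed.
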